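(* Let $\mathcal{H}=(C,F,D,G)$ be a hybrid system on $\mathcal{X}$, let $p$ be an atomic proposition and $K:=\{x\in\mathcal{X}:p(x)=1\}$. Then $(\phi,(t,j))\models\bigcirc p$ for every maximal solution $\phi$ to $\mathcal{H}$ and every $(t,j)\in\operatorname{dom}\phi$ if and only if all of the following hold: (a) each nontrivial solution $\phi$ to $\mathcal{H}$ satisfies $\phi(0,0)\in D$; (b) no flow of $\mathcal{H}$ is possible from any $x\in C$ (i.e., there is no solution $\phi$ with $\phi(0,0)=x\in C$ and $[0,\varepsilon)\times\{0\}\subset\operatorname{dom}\phi$ for some $\varepsilon>0$); (c) $G(D)\subset K\cap D$; (d) $\overline C\subset D$.
   Context: Hybrid systems. A hybrid system $\mathcal{H}=(C,F,D,G)$ on a state space $\mathcal{X}\subset\mathbb{R}^n$ is given by a flow set $C\subset\mathcal{X}$, a set-valued flow map $F:\mathcal{X}\rightrightarrows\mathcal{X}$, a jump set $D\subset\mathcal{X}$ and a set-valued jump map $G:\mathcal{X}\rightrightarrows\mathcal{X}$, and represents $\dot x\in F(x)$ for $x\in C$, $x^+\in G(x)$ for $x\in D$. Standing assumptions: $C\subset\operatorname{dom}F$, $D\subset\operatorname{dom}G$, $\overline{C}\cup D\cup G(D)\subset\mathcal{X}$ ($\overline C$ is the closure of $C$). A set $E\subset\mathbb{R}_{\ge0}\times\mathbb{N}$ is a hybrid time domain if for every $(T,J)\in E$ there are $0=t_0\le t_1\le\dots\le t_{J+1}$ with $E\cap([0,T]\times\{0,\dots,J\})=\bigcup_{j=0}^J([t_j,t_{j+1}]\times\{j\})$.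 A hybrid arc is a map $\phi:\operatorname{dom}\phi\to\mathbb{R}^n$ on a hybrid time domain such that for each $j$, $t\mapsto\phi(t,j)$ is locally absolutely continuous on $I^j=\{t:(t,j)\in\operatorname{dom}\phi\}$. A hybrid arc $\phi$ is a solution to $\mathcal{H}$ if (i) $\phi(0,0)\in\overline C\cup D$; (ii) for each $j$ such that $I^j$ has nonempty interior, $\phi(t,j)\in C$ for all $t\in\operatorname{int}I^j$ and $\dot\phi(t,j)\in F(\phi(t,j))$ for almost all $t\in I^j$; (iii) for each $(t,j)\in\operatorname{dom}\phi$ with $(t,j+1)\in\operatorname{dom}\phi$, $\phi(t,j)\in D$ and $\phi(t,j+1)\in G(\phi(t,j))$. A solution is nontrivial if its domain contains at least two points; it is maximal if it cannot be extended to a solution with strictly larger domain. Temporal logic. An atomic proposition is a function $p:\mathcal{X}\to\{0,1\}$; write $\phi(t,j)\Vdash p$ if $p(\phi(t,j))=1$. $(\phi,(t,j))\models p$ iff $\phi(t,j)\Vdash p$; $(\phi,(t,j))\models\bigcirc p$ iff $(t,j+1)\in\operatorname{dom}\phi$ and $(\phi,(t,j+1))\models p$. The set $K$ is assumed nonempty. *)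

(* Defs.v *)
From Stdlib Require Import Reals Lra.
From Stdlib Require Fin.
Open Scope R_scope.

Definition Vec (n : nat) : Type := Fin.t n -> R.

(** Closure in R^n (sup-norm balls; same topology as the Euclidean one). *)
Definition closure {n : nat} (A : Vec n -> Prop) (x : Vec n) : Prop :=
  forall eps : R, 0 < eps ->
    exists y : Vec n, A y /\ forall i : Fin.t n, Rabs (x i - y i) < eps.

(** A hybrid system (C, F, D, G) on a state space X ⊂ R^n; set-valued maps
    are given by their graphs. *)
Record HybridSystem (n : nat) : Type := {
  hs_X : Vec n -> Prop;
  hs_C : Vec n -> Prop;
  hs_F : Vec n -> Vec n -> Prop;
  hs_D : Vec n -> Prop;
  hs_G : Vec n -> Vec n -> Prop
}.
Arguments hs_X {n}. Arguments hs_C {n}. Arguments hs_F {n}.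
Arguments hs_D {n}. Arguments hs_G {n}.

Definition standing_assumptions {n : nat} (H : HybridSystem n) : Prop :=
  (forall x v, hs_F H x v -> hs_X H x /\ hs_X H v) /\
  (forall x y, hs_G H x y -> hs_X H x /\ hs_X H y) /\
  (forall x, hs_C H x -> exists v, hs_F H x v) /\
  (forall x, hs_D H x -> exists y, hs_G H x y) /\
  (forall x, closure (hs_C H) x -> hs_X H x) /\
  (forall x, hs_D H x -> hs_X H x) /\
  (forall x y, hs_D H x -> hs_G H x y -> hs_X H y).

Definition hybrid_time_domain (E : R -> nat -> Prop) : Prop :=
  (forall t j, E t j -> 0 <= t) /\
  forall (T : R) (J : nat), E T J ->
    exists tt : nat -> R,
      tt 0%nat = 0 /\
      (forall k, (k <= J)%nat -> tt k <= tt (S k)) /\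
      forall (s : R) (k : nat),
        (E s k /\ 0 <= s <= T /\ (k <= J)%nat) <->
        ((k <= J)%nat /\ tt k <= s <= tt (S k)).

Fixpoint fsum (f : nat -> R) (m : nat) : R :=
  match m with
  | O => 0
  | S m' => fsum f m' + f m'
  end.

Definition abs_continuous_on (f : R -> R) (a b : R) : Prop :=
  forall eps : R, 0 < eps -> exists delta : R, 0 < delta /\
    forall (m : nat) (aa bb : nat -> R),
      (forall k, (k < m)%nat -> a <= aa k /\ aa k <= bb k /\ bb k <= b) ->
      (forall k l, (k < l)%nat -> (l < m)%nat -> bb k <= aa l) ->
      fsum (fun k => bb k - aa k) m < delta ->
      fsum (fun k => Rabs (f (bb k) - f (aa k))) m < eps.

Definition loc_abs_continuous_on {n : nat} (f : R -> Vec n) (I : R -> Prop)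
  : Prop :=
  forall a b : R, a <= b -> (forall s, a <= s <= b -> I s) ->
    forall i : Fin.t n, abs_continuous_on (fun s => f s i) a b.

Definition hybrid_arc {n : nat} (E : R -> nat -> Prop) (phi : R -> nat -> Vec n)
  : Prop :=
  hybrid_time_domain E /\
  forall j : nat, loc_abs_continuous_on (fun t => phi t j) (fun t => E t j).

Definition interior (I : R -> Prop) (t : R) : Prop :=
  exists eps : R, 0 < eps /\ forall s, Rabs (s - t) < eps -> I s.

Definition null_set (N : R -> Prop) : Prop :=
  forall eps : R, 0 < eps ->
    exists aa bb : nat -> R,
      (forall k, aa k <= bb k) /\
      (forall x, N x -> exists k, aa k <= x <= bb k) /\
      (forall m, fsum (fun k => bb k - aa k) m < eps).

Definition is_solution {n : nat} (H : HybridSystem n)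
  (E : R -> nat -> Prop) (phi : R -> nat -> Vec n) : Prop :=
  hybrid_arc E phi /\
  E 0 0%nat /\
  (closure (hs_C H) (phi 0 0%nat) \/ hs_D H (phi 0 0%nat)) /\
  (forall j : nat,
     (exists t, interior (fun s => E s j) t) ->
     (forall t, interior (fun s => E s j) t -> hs_C H (phi t j)) /\
     exists N : R -> Prop, null_set N /\
       forall t, E t j -> ~ N t ->
         interior (fun s => E s j) t /\
         exists v : Vec n, hs_F H (phi t j) v /\
           forall i : Fin.t n, derivable_pt_lim (fun s => phi s j i) t (v i)) /\
  (forall t j, E t j -> E t (S j) ->
     hs_D H (phi t j) /\ hs_G H (phi t j) (phi t (S j))).

Definition nontrivial (E : R -> nat -> Prop) : Prop :=
  exists t1 j1 t2 j2, E t1 j1 /\ E t2 j2 /\ (t1 <> t2 \/ j1 <> j2).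

Definition maximal_solution {n : nat} (H : HybridSystem n)
  (E : R -> nat -> Prop) (phi : R -> nat -> Vec n) : Prop :=
  is_solution H E phi /\
  ~ exists (E' : R -> nat -> Prop) (phi' : R -> nat -> Vec n),
      is_solution H E' phi' /\
      (forall t j, E t j -> E' t j) /\
      (exists t j, E' t j /\ ~ E t j) /\
      (forall t j, E t j -> phi' t j = phi t j).

Definition sat_next {n : nat} (p : Vec n -> bool)
  (E : R -> nat -> Prop) (phi : R -> nat -> Vec n) (t : R) (j : nat) : Prop :=
  E t (S j) /\ p (phi t (S j)) = true.

(* Main.v *)
Require Import Defs.
From Stdlib Require Import Reals.
From Stdlib Require Fin.
Open Scope R_scope.

Require Import Defs.
From Stdlib Require Import Reals Lra Lia Classical ClassicalEpsilon.
From Stdlib Require Fin Cantor ZArith.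
From mathcomp Require boolp classical_sets.
Open Scope R_scope.
Require Import Defs.

Lemma fsum_ext f g m : (forall k, (k < m)%nat -> f k = g k) -> fsum f m = fsum g m.
Proof.
induction m; simpl; intros H; auto.
rewrite IHm by (intros; apply H; lia). rewrite H by lia. reflexivity.
Qed.

Lemma fsum_nonneg f m : (forall k, 0 <= f k) -> 0 <= fsum f m.
Proof. induction m; simpl; intros H; [lra|]. pose proof (H m). specialize (IHm H). lra. Qed.

Lemma fsum_le f g m : (forall k, f k <= g k) -> fsum f m <= fsum g m.
Proof. induction m; simpl; intros H; [lra|]. pose proof (H m). specialize (IHm H). lra. Qed.

Lemma fsum_S1 f m : fsum f (S m) = f 0%nat + fsum (fun k => f (S k)) m.
Proof. induction m; simpl in *; [lra|]. rewrite IHm. lra. Qed.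

Lemma fsum_add f a b : fsum f (a + b) = fsum f a + fsum (fun k => f (a + k)%nat) b.
Proof. induction b; simpl. rewrite Nat.add_0_r. lra. rewrite Nat.add_succ_r. simpl. rewrite IHb. lra. Qed.

Lemma fsum_zero m : fsum (fun _ => 0) m = 0.
Proof. induction m; simpl; lra. Qed.

Lemma fsum_remove f K k0 : (k0 < K)%nat ->
  fsum f K = f k0 + fsum (fun k => if (k <? k0)%nat then f k else f (S k)) (K - 1).
Proof.
induction K; intros Hk; [lia|].
destruct (Nat.eq_dec k0 K) as [->|Hne].
- change (fsum f (S K)) with (fsum f K + f K). replace (S K - 1)%nat with K by lia.
  rewrite (fsum_ext (fun k => if (k <? K)%nat then f k else f (S k)) f K). lra. intros k Hk'. destruct (Nat.ltb_spec k K); [auto|lia].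
- change (fsum f (S K)) with (fsum f K + f K). rewrite IHK by lia. destruct K as [|K']; [lia|].
  replace (S (S K') - 1)%nat with (S K') by lia. replace (S K' - 1)%nat with K' by lia.
  simpl. destruct (Nat.ltb_spec K' k0); [lia|]. lra.
Qed.

Lemma fsum_inj_bound (g : nat -> R) (B : nat) : (forall x, 0 <= g x) ->
  forall (K : nat) (e : nat -> nat),
  (forall k, (k < K)%nat -> (e k < B)%nat) ->
  (forall k l, (k < K)%nat -> (l < K)%nat -> e k = e l -> k = l) ->
  fsum (fun k => g (e k)) K <= fsum g B.
Proof.
intros Hg. induction B; intros K e Hb Hi.
- destruct K. simpl; lra. specialize (Hb 0%nat ltac:(lia)). lia.
- destruct (classic (exists k0, (k0 < K)%nat /\ e k0 = B)) as [[k0 [Hk0 Hek]]|Hno].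
  + rewrite (fsum_remove _ K k0 Hk0). simpl. rewrite Hek.
    set (e' := fun k => if (k <? k0)%nat then e k else e (S k)).
    assert (IH := IHB (K - 1)%nat e').
    rewrite (fsum_ext _ (fun k => g (e' k))).
    * assert (fsum (fun k => g (e' k)) (K - 1) <= fsum g B); [|lra].
      apply IH.
      -- intros k Hk. unfold e'. destruct (Nat.ltb_spec k k0).
         ++ assert (e k < S B)%nat by (apply Hb; lia).
            assert (e k <> B). { intro h. rewrite <- Hek in h. apply Hi in h; lia. } lia.
         ++ assert (e (S k) < S B)%nat by (apply Hb; lia).
            assert (e (S k) <> B). { intro h. rewrite <- Hek in h. apply Hi in h; lia. } lia.
      -- intros k l Hk Hl. unfold e'.
         destruct (Nat.ltb_spec k k0), (Nat.ltb_spec l k0); intro h; apply Hi in h; lia.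
    * intros k _. unfold e'. destruct (k <? k0)%nat; auto.
  + simpl. assert (fsum (fun k => g (e k)) K <= fsum g B); [|specialize (Hg B); lra].
    apply IHB; auto. intros k Hk. assert (e k < S B)%nat by auto.
    assert (e k <> B) by (intro h; apply Hno; exists k; auto). lia.
Qed.

Lemma fsum_block f B M :
  fsum f (M * B) = fsum (fun m => fsum (fun i => f (m * B + i)%nat) B) M.
Proof.
induction M; simpl; auto.
replace (B + M * B)%nat with (M * B + B)%nat by lia.
rewrite fsum_add, IHM. reflexivity.
Qed.

Lemma fsum_geom eps M : fsum (fun m => eps / 2 ^ (m + 2)) M = eps / 2 - eps / 2 ^ (M + 1).
Proof.
induction M; simpl fsum. simpl. field.
rewrite IHM. replace (S M + 1)%nat with (S (M + 1)) by lia.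
replace (M + 2)%nat with (S (M + 1)) by lia. simpl. field.
apply pow_nonzero. lra.
Qed.

Lemma null_sub (N N' : R -> Prop) : (forall x, N' x -> N x) -> null_set N -> null_set N'.
Proof.
intros Hs Hn eps He. destruct (Hn eps He) as [aa [bb [H1 [H2 H3]]]].
exists aa, bb. split; [|split]; auto.
Qed.

Lemma null_add_point (N : R -> Prop) p : null_set N -> null_set (fun x => N x \/ x = p).
Proof.
intros Hn eps He. destruct (Hn eps He) as [aa [bb [H1 [H2 H3]]]].
exists (fun k => match k with O => p | S k' => aa k' end),
       (fun k => match k with O => p | S k' => bb k' end).
split; [|split].
- intros [|k]; [lra|apply H1].
- intros x [Hx|Hx].
  + destruct (H2 x Hx) as [k Hk]. exists (S k). exact Hk.
  + exists O. lra.
- intros [|m]. simpl; lra. rewrite fsum_S1. simpl (match 0%nat with | _ => _ end).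
  specialize (H3 m). lra.
Qed.

Lemma null_shift (N : R -> Prop) c : null_set N -> null_set (fun s => N (c + s)).
Proof.
intros Hn eps He. destruct (Hn eps He) as [aa [bb [H1 [H2 H3]]]].
exists (fun k => aa k - c), (fun k => bb k - c). split; [|split].
- intro k; specialize (H1 k); lra.
- intros x Hx. destruct (H2 _ Hx) as [k Hk]. exists k; lra.
- intro m. rewrite (fsum_ext _ (fun k => bb k - aa k)). apply H3. intros; lra.
Qed.

Lemma nat_lin_inj a b c d M : (b < M)%nat -> (d < M)%nat -> (a * M + b = c * M + d)%nat ->
  a = c /\ b = d.
Proof.
intros Hb Hd Heq. destruct (Nat.lt_trichotomy a c) as [h|[h|h]].
- exfalso. assert (a * M + M <= c * M)%nat by nia. lia.
- subst; lia.
- exfalso. assert (c * M + M <= a * M)%nat by nia. lia.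
Qed.

Lemma null_countable (N : nat -> R -> Prop) :
  (forall m, null_set (N m)) -> null_set (fun x => exists m, N m x).
Proof.
intros Hn eps He.
assert (Hex : forall m, exists ab : (nat -> R) * (nat -> R),
  (forall k, fst ab k <= snd ab k) /\
  (forall x, N m x -> exists k, fst ab k <= x <= snd ab k) /\
  (forall q, fsum (fun k => snd ab k - fst ab k) q < eps / 2 ^ (m + 2))).
{ intro m. assert (0 < eps / 2 ^ (m + 2)). { apply Rdiv_lt_0_compat; auto. apply pow_lt; lra. }
  destruct (Hn m _ H) as [aa [bb [H1 [H2 H3]]]]. exists (aa, bb). simpl. auto. }
set (pick := fun m => proj1_sig (constructive_indefinite_description _ (Hex m))).
assert (Hp : forall m, (forall k, fst (pick m) k <= snd (pick m) k) /\
  (forall x, N m x -> exists k, fst (pick m) k <= x <= snd (pick m) k) /\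
  (forall q, fsum (fun k => snd (pick m) k - fst (pick m) k) q < eps / 2 ^ (m + 2))).
{ intro m. unfold pick. destruct (constructive_indefinite_description _ (Hex m)). simpl. auto. }
set (A := fun m i => fst (pick m) i). set (Bb := fun m i => snd (pick m) i).
exists (fun k => A (fst (Cantor.of_nat k)) (snd (Cantor.of_nat k))),
       (fun k => Bb (fst (Cantor.of_nat k)) (snd (Cantor.of_nat k))).
split; [|split].
- intro k. apply Hp.
- intros x [m Hm]. destruct (proj1 (proj2 (Hp m)) x Hm) as [i Hi].
  exists (Cantor.to_nat (m, i)). rewrite Cantor.cancel_of_to. simpl. exact Hi.
- intro M.
  set (L := fun m i => Bb m i - A m i).
  assert (HL : forall m i, 0 <= L m i). { intros m i. unfold L, A, Bb. pose proof (proj1 (Hp m) i). lra. }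
  set (g := fun q => L (q / M)%nat (q mod M)%nat).
  set (e := fun k => (fst (Cantor.of_nat k) * M + snd (Cantor.of_nat k))%nat).
  assert (Hbd : forall k, (k < M)%nat -> (fst (Cantor.of_nat k) < M)%nat /\ (snd (Cantor.of_nat k) < M)%nat).
  { intros k Hk. pose proof (Cantor.cancel_to_of k) as Hc.
    destruct (Cantor.of_nat k) as [x y]. simpl.
    pose proof (Cantor.to_nat_non_decreasing x y). lia. }
  assert (Hge : forall k, (k < M)%nat -> g (e k) = L (fst (Cantor.of_nat k)) (snd (Cantor.of_nat k))).
  { intros k Hk. destruct (Hbd k Hk) as [h1 h2]. unfold g, e.
    destruct (Cantor.of_nat k) as [x y]. simpl in *.
    rewrite Nat.div_add_l by lia. rewrite Nat.div_small by lia. rewrite Nat.add_0_r.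
    rewrite Nat.add_comm, Nat.Div0.mod_add. rewrite Nat.mod_small by lia. reflexivity. }
  assert (H1 : fsum (fun k => Bb (fst (Cantor.of_nat k)) (snd (Cantor.of_nat k)) -
                              A (fst (Cantor.of_nat k)) (snd (Cantor.of_nat k))) M
               = fsum (fun k => g (e k)) M).
  { apply fsum_ext. intros k Hk. rewrite Hge; auto. }
  rewrite H1.
  assert (H2 : fsum (fun k => g (e k)) M <= fsum g (M * M)).
  { apply fsum_inj_bound.
    - intro x. apply HL.
    - intros k Hk. destruct (Hbd k Hk). unfold e. nia.
    - intros k l Hk Hl Heq. destruct (Hbd k Hk), (Hbd l Hl). unfold e in Heq.
      apply nat_lin_inj in Heq; auto. destruct Heq as [h1 h2].
      rewrite <- (Cantor.cancel_to_of k), <- (Cantor.cancel_to_of l).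
      destruct (Cantor.of_nat k), (Cantor.of_nat l). simpl in *. subst. reflexivity. }
  assert (H3 : fsum g (M * M) <= fsum (fun m => eps / 2 ^ (m + 2)) M).
  { rewrite fsum_block. apply fsum_le. intro m.
    rewrite (fsum_ext _ (L m)).
    - left. apply Hp.
    - intros i Hi. unfold g. rewrite Nat.div_add_l by lia. rewrite Nat.div_small by lia.
      rewrite Nat.add_0_r. rewrite Nat.add_comm, Nat.Div0.mod_add. rewrite Nat.mod_small by lia. reflexivity. }
  rewrite fsum_geom in H3.
  assert (0 < eps / 2 ^ (M + 1)). { apply Rdiv_lt_0_compat; auto. apply pow_lt; lra. }
  lra.
Qed.

Definition trunc_spec (E : R -> nat -> Prop) T J (tt : nat -> R) : Prop :=
  tt 0%nat = 0 /\ (forall k, (k <= J)%nat -> tt k <= tt (S k)) /\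
  forall (s : R) (k : nat), (E s k /\ 0 <= s <= T /\ (k <= J)%nat) <->
                            ((k <= J)%nat /\ tt k <= s <= tt (S k)).

Lemma get_trunc E T J : hybrid_time_domain E -> E T J -> exists tt, trunc_spec E T J tt.
Proof. intros [_ H] h. destruct (H T J h) as [tt Htt]. exists tt. exact Htt. Qed.

Lemma tt_nonneg E T J tt : trunc_spec E T J tt -> forall k, (k <= S J)%nat -> 0 <= tt k.
Proof.
intros [H0 [Hm _]]. induction k; intros Hk. lra.
specialize (IHk ltac:(lia)). specialize (Hm k ltac:(lia)). lra.
Qed.

Lemma tdom_end E T J tt : hybrid_time_domain E -> E T J -> trunc_spec E T J tt -> tt (S J) = T.
Proof.
intros [Hnn _] HE Hs. pose proof Hs as [H0 [Hm Hsp]].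
assert (h1 := proj1 (Hsp T J) (conj HE (conj (conj (Hnn _ _ HE) (Rle_refl _)) (Nat.le_refl _)))).
assert (h2 := proj2 (Hsp (tt (S J)) J) (conj (Nat.le_refl _) (conj (Hm J (Nat.le_refl _)) (Rle_refl _)))).
lra.
Qed.

Lemma tdom_interval E a b s j : hybrid_time_domain E -> E a j -> E b j -> a <= s <= b -> E s j.
Proof.
intros Hh Ha Hb Hs. destruct (get_trunc E b j Hh Hb) as [tt Htt].
pose proof Htt as [H0 [Hm Hsp]]. destruct Hh as [Hnn Hh'].
assert (h1 := proj1 (Hsp a j) (conj Ha (conj (conj (Hnn _ _ Ha) (Rle_trans _ _ _ (proj1 Hs) (proj2 Hs))) (Nat.le_refl _)))).
assert (h2 := proj1 (Hsp b j) (conj Hb (conj (conj (Hnn _ _ Hb) (Rle_refl _)) (Nat.le_refl _)))).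
destruct h1 as [_ h1], h2 as [_ h2].
assert (h3 : (j <= j)%nat /\ tt j <= s <= tt (S j)) by (split; [lia|lra]).
apply (Hsp s j) in h3. tauto.
Qed.

Lemma trunc_sub E1 E2 T J s k : hybrid_time_domain E1 -> hybrid_time_domain E2 ->
  (forall t j, E1 t j -> E2 t j) -> E1 T J -> E2 s k -> 0 <= s <= T -> (k <= J)%nat -> E1 s k.
Proof.
intros H1 H2 Hsub HT Hs Hst Hk.
destruct (get_trunc E1 T J H1 HT) as [tt Htt].
destruct (get_trunc E2 T J H2 (Hsub _ _ HT)) as [tt' Htt'].
pose proof (tdom_end _ _ _ _ H1 HT Htt) as Hend.
pose proof (tdom_end _ _ _ _ H2 (Hsub _ _ HT) Htt') as Hend'.
pose proof Htt as [H0 [Hm Hsp]]. pose proof Htt' as [H0' [Hm' Hsp']].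
assert (Heq : forall l, (l <= S J)%nat -> tt l = tt' l).
{ intros l Hl. destruct l as [|l]. lra.
  destruct (Nat.eq_dec l J) as [->|Hne]. lra.
  assert (HlJ : (S l <= J)%nat) by lia.
  assert (A1 := proj2 (Hsp (tt (S l)) (S l)) (conj HlJ (conj (Rle_refl _) (Hm _ HlJ)))).
  destruct A1 as [A1e [A1r _]].
  assert (B1 := proj1 (Hsp' (tt (S l)) (S l)) (conj (Hsub _ _ A1e) (conj A1r HlJ))).
  assert (A2 := proj2 (Hsp (tt (S l)) l) (conj (ltac:(lia) : (l <= J)%nat) (conj (Hm l ltac:(lia)) (Rle_refl _)))).
  destruct A2 as [A2e [A2r _]].
  assert (B2 := proj1 (Hsp' (tt (S l)) l) (conj (Hsub _ _ A2e) (conj A2r (Nat.le_trans _ _ _ (Nat.le_succ_diag_r l) HlJ)))).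
  destruct B1 as [_ B1], B2 as [_ B2]. lra. }
assert (C1 := proj1 (Hsp' s k) (conj Hs (conj Hst Hk))).
apply (proj2 (Hsp s k)). rewrite (Heq k), (Heq (S k)) by lia. exact C1.
Qed.

Lemma tdom_prev E s k : hybrid_time_domain E -> E s (S k) -> exists s', 0 <= s' <= s /\ E s' k.
Proof.
intros Hh Hs. destruct (get_trunc E s (S k) Hh Hs) as [tt Htt].
pose proof Htt as [H0 [Hm Hsp]].
assert (A := proj2 (Hsp (tt (S k)) k) (conj (ltac:(lia) : (k <= S k)%nat) (conj (Hm k ltac:(lia)) (Rle_refl _)))).
exists (tt (S k)). tauto.
Qed.

Lemma tdom_points m : hybrid_time_domain (fun t j => t = 0 /\ (j <= m)%nat).
Proof.
split. intros t j [-> _]; lra.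
intros T J [-> HJ]. exists (fun _ => 0). split; [reflexivity|split].
- intros; lra.
- intros s k. split.
  + intros [[-> _] [_ Hk]]. split; auto. lra.
  + intros [Hk Hs]. assert (s = 0) by lra. subst. split; [split; auto; lia|split; [lra|auto]].
Qed.

Lemma tdom_interval0 c : hybrid_time_domain (fun t j => j = 0%nat /\ 0 <= t <= c).
Proof.
split. intros t j [_ H]; lra.
intros T J [-> HT]. exists (fun k => match k with O => 0 | S _ => T end).
split; [reflexivity|split].
- intros k Hk. assert (k = 0%nat) by lia. subst. lra.
- intros s k. split.
  + intros [[-> Hs] [Hs' _]]. split; auto.
  + intros [Hk Hs]. assert (k = 0%nat) by lia. subst. simpl in Hs. repeat split; (lra || lia).
Qed.

Lemma ac_ext f g a b : abs_continuous_on f a b -> (forall s, a <= s <= b -> g s = f s) ->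
  abs_continuous_on g a b.
Proof.
intros Hf Hfg eps He. destruct (Hf eps He) as [d [Hd Hf']]. exists d. split; auto.
intros m aa bb H1 H2 H3. rewrite (fsum_ext _ (fun k => Rabs (f (bb k) - f (aa k)))).
apply Hf'; auto. intros k Hk. specialize (H1 k Hk). rewrite !Hfg by lra. reflexivity.
Qed.

Lemma ac_point f a : abs_continuous_on f a a.
Proof.
intros eps He. exists 1. split; [lra|]. intros m aa bb H1 _ _.
rewrite (fsum_ext _ (fun _ => 0)). rewrite fsum_zero. auto.
intros k Hk. specialize (H1 k Hk). replace (bb k) with (aa k) by lra.
unfold Rminus. rewrite Rplus_opp_r, Rabs_R0. reflexivity.
Qed.

Lemma ac_shift f c a b : abs_continuous_on f (c + a) (c + b) ->
  abs_continuous_on (fun s => f (c + s)) a b.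
Proof.
intros Hf eps He. destruct (Hf eps He) as [d [Hd Hf']]. exists d. split; auto.
intros m aa bb H1 H2 H3.
apply (Hf' m (fun k => c + aa k) (fun k => c + bb k)).
- intros k Hk. specialize (H1 k Hk). lra.
- intros k l Hk Hl. specialize (H2 k l Hk Hl). lra.
- rewrite (fsum_ext _ (fun k => bb k - aa k)). auto. intros; lra.
Qed.

Lemma dpl_local f g t l : derivable_pt_lim f t l ->
  (exists e, 0 < e /\ forall s, Rabs (s - t) < e -> g s = f s) -> derivable_pt_lim g t l.
Proof.
intros Hf [e [He Hg]] eps Heps. destruct (Hf eps Heps) as [d Hd].
assert (Hm : 0 < Rmin d e) by (apply Rmin_pos; [apply cond_pos|auto]).
exists (mkposreal _ Hm). intros h Hh Hh'. simpl in Hh'.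
rewrite !Hg. apply Hd; auto. apply Rlt_le_trans with (1 := Hh'); apply Rmin_l.
- unfold Rminus; rewrite Rplus_opp_r, Rabs_R0; auto.
- replace (t + h - t) with h by ring. apply Rlt_le_trans with (1 := Hh'); apply Rmin_r.
Qed.

Lemma dpl_shift f c t l : derivable_pt_lim f (c + t) l ->
  derivable_pt_lim (fun s => f (c + s)) t l.
Proof.
intros Hf eps Heps. destruct (Hf eps Heps) as [d Hd]. exists d. intros h Hh Hh'.
rewrite <- Rplus_assoc. apply Hd; auto.
Qed.

Lemma closure_incl {n} (A : Vec n -> Prop) x : A x -> closure A x.
Proof. intros Hx eps He. exists x. split; auto. intro i. unfold Rminus. rewrite Rplus_opp_r, Rabs_R0. auto. Qed.

Lemma interior_in (P : R -> Prop) t : interior P t -> P t.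
Proof. intros [e [He H]]. apply H. unfold Rminus. rewrite Rplus_opp_r, Rabs_R0. auto. Qed.

Lemma interior_bounds (j : nat) c s : interior (fun s => j = 0%nat /\ 0 <= s <= c) s -> 0 < s < c.
Proof.
intros [e [He H]].
destruct (H (s - e / 2)) as [_ H1]. { rewrite Rabs_left; lra. }
destruct (H (s + e / 2)) as [_ H2]. { rewrite Rabs_right; lra. }
lra.
Qed.

Lemma ball_interior (P : R -> Prop) a b s : (forall x, a < x < b -> P x) -> a < s < b -> interior P s.
Proof.
intros H Hs. exists (Rmin (s - a) (b - s)). split. apply Rmin_pos; lra.
intros x Hx. apply H. pose proof (Rmin_l (s - a) (b - s)). pose proof (Rmin_r (s - a) (b - s)).
destruct (Rabs_def2 _ _ Hx). lra.
Qed.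

Section Backward.
Variable n : nat.
Variable H : HybridSystem n.

Lemma no_interior (Hb : forall (E : R -> nat -> Prop) (phi : R -> nat -> Vec n) (eps : R),
      is_solution H E phi -> 0 < eps -> hs_C H (phi 0 0%nat) ->
      ~ (forall t, 0 <= t < eps -> E t 0%nat))
  E phi : is_solution H E phi -> forall k t0, ~ interior (fun s => E s k) t0.
Proof.
intros Hsol k t0 Hint. pose proof Hint as [e [He Hball]].
destruct Hsol as [[Hh Hac] [H00 [Hi [Hii Hiii]]]].
destruct (Hii k (ex_intro _ t0 Hint)) as [HC [N [HN Hder]]].
set (c := e / 2).
assert (Hc : 0 < c) by (unfold c; lra).
assert (Hin : forall s, 0 <= s <= c -> E (t0 + s) k).
{ intros s Hs. apply Hball. replace (t0 + s - t0) with s by ring. rewrite Rabs_right; unfold c in *; lra. }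
apply (Hb (fun s k' => k' = 0%nat /\ 0 <= s <= c) (fun s _ => phi (t0 + s) k) c); auto.
- split; [split|split; [|split; [|split]]].
  + apply tdom_interval0.
  + intros j' a b Hab HI i. destruct (HI a ltac:(lra)) as [-> Ha]. destruct (HI b ltac:(lra)) as [_ Hb'].
    apply (ac_shift (fun s => phi s k i)). apply Hac. lra. intros s Hs.
    replace s with (t0 + (s - t0)) by ring. apply Hin. lra.
  + split; auto; lra.
  + left. apply closure_incl. rewrite Rplus_0_r. apply HC. exact Hint.
  + intros j' [s0 Hs0]. pose proof (interior_in _ _ Hs0) as [-> _]. split.
    * intros s Hs. apply interior_bounds in Hs. apply HC.
      apply (ball_interior _ (t0 - e) (t0 + e)); [|unfold c in *; lra].
      intros x Hx. apply Hball. destruct (Rle_dec 0 (x - t0)); [rewrite Rabs_right|rewrite Rabs_left]; lra.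
    * exists (fun x => (N (t0 + x) \/ x = 0) \/ x = c). split.
      -- apply null_add_point, null_add_point, null_shift. exact HN.
      -- intros s [_ Hs] HnN.
         assert (Hs' : 0 < s < c) by (destruct (Req_dec s 0); destruct (Req_dec s c); [tauto|tauto|tauto|lra]).
         split. apply (ball_interior _ 0 c); auto. intros; split; auto; lra.
         destruct (Hder (t0 + s) (Hin s ltac:(lra)) ltac:(tauto)) as [_ [v [Hv Hd]]].
         exists v. split; auto. intro i. apply (dpl_shift (fun x => phi x k i)). apply Hd.
  + intros s j' [-> _] [Habs _]. discriminate.
- rewrite Rplus_0_r. apply HC. exact Hint.
- intros t Ht. split; auto; lra.
Qed.

Lemma all_zero E : hybrid_time_domain E -> (forall k t0, ~ interior (fun s => E s k) t0) ->
  forall s k, E s k -> s = 0.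
Proof.
intros Hh Hni s k Hs. destruct (get_trunc E s k Hh Hs) as [tt Htt].
rewrite <- (tdom_end _ _ _ _ Hh Hs Htt).
pose proof Htt as [H0 [Hm Hsp]].
assert (forall l, (l <= S k)%nat -> tt l = 0); [|auto].
induction l; intros Hl; auto.
specialize (IHl ltac:(lia)). specialize (Hm l ltac:(lia)).
destruct (Req_dec (tt (S l)) (tt l)) as [h|h]; [lra|].
exfalso. apply (Hni l ((tt l + tt (S l)) / 2)).
apply (ball_interior _ (tt l) (tt (S l))); [|lra].
intros x Hx. apply (proj2 (Hsp x l)). split; [lia|lra].
Qed.

Lemma prev_zero E : hybrid_time_domain E -> (forall s k, E s k -> s = 0) ->
  forall k, E 0 (S k) -> E 0 k.
Proof.
intros Hh Hz k Hk. destruct (tdom_prev E 0 k Hh Hk) as [s' [Hs' Hs'E]].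
assert (s' = 0) by lra. subst. auto.
Qed.

Lemma down_zero E : hybrid_time_domain E -> (forall s k, E s k -> s = 0) ->
  forall k k', E 0 k -> (k' <= k)%nat -> E 0 k'.
Proof.
intros Hh Hz k. induction k; intros k' Hk Hle.
- assert (k' = 0%nat) by lia. subst; auto.
- destruct (Nat.eq_dec k' (S k)) as [->|]; auto.
  apply IHk. apply prev_zero; auto. lia.
Qed.

End Backward.

Lemma backward n (H : HybridSystem n) (p : Vec n -> bool)
  (HSA : standing_assumptions H)
  (Hb : forall (E : R -> nat -> Prop) (phi : R -> nat -> Vec n) (eps : R),
      is_solution H E phi -> 0 < eps -> hs_C H (phi 0 0%nat) ->
      ~ (forall t, 0 <= t < eps -> E t 0%nat))
  (Hc : forall x y, hs_D H x -> hs_G H x y -> (hs_X H y /\ p y = true) /\ hs_D H y)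
  (Hd : forall x, closure (hs_C H) x -> hs_D H x) :
  forall (E : R -> nat -> Prop) (phi : R -> nat -> Vec n),
     maximal_solution H E phi -> forall t j, E t j -> sat_next p E phi t j.
Proof.
intros E phi [Hsol Hmax] t j Htj.
pose proof (no_interior n H Hb E phi Hsol) as Hni.
pose proof Hsol as [[Hh Hac] [H00 [Hi [Hii Hiii]]]].
pose proof (all_zero E Hh Hni) as Hz.
assert (HD : forall k, E 0 k -> hs_D H (phi 0 k)).
{ induction k; intros Hk.
  - destruct Hi as [Hi|Hi]; auto.
  - pose proof (prev_zero E Hh Hz k Hk) as Hk'.
    destruct (Hiii 0 k Hk' Hk) as [HDk HG]. apply (Hc _ _ HDk HG). }
assert (t = 0) by (apply (Hz t j); auto). subst t.
assert (HS : E 0 (S j)).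
{ destruct (classic (E 0 (S j))) as [h|Hn]; auto. exfalso.
  destruct HSA as [_ [_ [_ [HdomG _]]]].
  destruct (HdomG _ (HD j Htj)) as [y Hy].
  assert (Hle : forall s k, E s k -> (k <= j)%nat).
  { intros s k Hk. pose proof (Hz _ _ Hk). subst s. destruct (Compare_dec.le_lt_dec k j); auto.
    exfalso. apply Hn. apply (down_zero E Hh Hz k); auto. }
  apply Hmax. exists (fun s k => s = 0 /\ (k <= S j)%nat).
  exists (fun s k => if Nat.eq_dec k (S j) then y else phi s k).
  split; [|split; [|split]].
  - split; [split|split; [|split; [|split]]].
    + apply tdom_points.
    + intros j' a b Hab HI i. destruct (HI a ltac:(lra)) as [-> _]. destruct (HI b ltac:(lra)) as [-> _].
      apply ac_point.
    + split; auto; lia.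
    + destruct (Nat.eq_dec 0 (S j)); [discriminate|]. exact Hi.
    + intros j' [s0 [e [He Hball]]]. exfalso.
      destruct (Hball s0) as [h1 _]. { unfold Rminus; rewrite Rplus_opp_r, Rabs_R0; auto. }
      destruct (Hball (s0 + e / 2)) as [h2 _]. { rewrite Rabs_right; lra. }
      lra.
    + intros s k [-> Hk1] [_ Hk2].
      destruct (Nat.eq_dec k (S j)) as [|_]; [lia|].
      destruct (Nat.eq_dec (S k) (S j)) as [e|ne].
      * injection e as ->. split; auto.
      * assert (E 0 (S k)) by (apply (down_zero E Hh Hz j); auto; lia).
        assert (E 0 k) by (apply (down_zero E Hh Hz j); auto; lia).
        apply Hiii; auto.
  - intros s k Hk. split. apply (Hz _ _ Hk). pose proof (Hle _ _ Hk). lia.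
  - exists 0, (S j). split. split; auto. exact Hn.
  - intros s k Hk. destruct (Nat.eq_dec k (S j)); auto. pose proof (Hle _ _ Hk). lia. }
split; auto.
destruct (Hiii 0 j Htj HS) as [HDj HG]. apply (Hc _ _ HDj HG).
Qed.

Lemma arch_nat x : exists m : nat, x <= INR m.
Proof.
destruct (Rle_dec x 0) as [h|h]. exists 0%nat. simpl. lra.
destruct (archimed x) as [h1 h2].
assert (Hz : (0 < up x)%Z). { apply lt_0_IZR. lra. }
exists (Z.to_nat (up x)). rewrite INR_IZR_INZ. rewrite Stdlib.ZArith.Znat.Z2Nat.id by lia. lra.
Qed.

Lemma cofinal (I : R -> Prop) : (exists x, I x) ->
  exists u : nat -> R, (forall m, I (u m)) /\ forall t, I t -> exists m, t <= u m.
Proof.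
intros Hne. destruct (classic (bound I)) as [Hb|Hnb].
- destruct (completeness I Hb Hne) as [b [Hub Hlub]].
  destruct (classic (I b)) as [Ib|nIb].
  + exists (fun _ => b). split; auto. intros t It. exists 0%nat. apply Hub; auto.
  + assert (Hex : forall m : nat, exists x, I x /\ b - / (INR m + 1) < x).
    { intro m. apply NNPP. intro Hn.
      assert (Hpos : 0 < / (INR m + 1)). { apply Rinv_0_lt_compat. pose proof (pos_INR m). lra. }
      assert (b <= b - / (INR m + 1)); [|lra].
      apply Hlub. intros x Ix. apply Rnot_lt_le. intro h. apply Hn. exists x; auto. }
    exists (fun m => proj1_sig (constructive_indefinite_description _ (Hex m))). split.
    * intro m. exact (proj1 (proj2_sig (constructive_indefinite_description _ (Hex m)))).
    * intros t It. assert (t <= b) by (apply Hub; auto).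
      assert (t <> b) by (intro e; rewrite e in It; tauto).
      destruct (arch_nat (/ (b - t))) as [m Hm]. exists m.
      pose proof (proj2 (proj2_sig (constructive_indefinite_description _ (Hex m)))) as Hx.
      set (x := proj1_sig (constructive_indefinite_description _ (Hex m))) in *.
      assert (/ (INR m + 1) < b - t).
      { assert (0 < b - t) by lra.
        assert (0 < / (b - t)) by (apply Rinv_0_lt_compat; lra).
        rewrite <- (Rinv_inv (b - t)). apply Rinv_lt_contravar.
        nra. lra. }
      lra.
- assert (Hex : forall m : nat, exists x, I x /\ INR m <= x).
  { intro m. apply NNPP. intro Hn. apply Hnb. exists (INR m). intros x Ix.
    apply Rnot_lt_le. intro h. apply Hn. exists x. split; auto; lra. }
  exists (fun m => proj1_sig (constructive_indefinite_description _ (Hex m))). split.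
  * intro m. exact (proj1 (proj2_sig (constructive_indefinite_description _ (Hex m)))).
  * intros t It. destruct (arch_nat t) as [m Hm]. exists m.
    pose proof (proj2 (proj2_sig (constructive_indefinite_description _ (Hex m)))) as Hx.
      set (x := proj1_sig (constructive_indefinite_description _ (Hex m))) in *. lra.
Qed.

Lemma null_empty : null_set (fun _ => False).
Proof.
intros eps He. exists (fun _ => 0), (fun _ => 0). split; [|split].
- intros; lra.
- intros x [].
- intro m. rewrite (fsum_ext _ (fun _ => 0)). rewrite fsum_zero. auto. intros; ring.
Qed.

Lemma interior_mono (P Q : R -> Prop) t : (forall x, P x -> Q x) -> interior P t -> interior Q t.
Proof. intros HPQ [e [He H]]. exists e. split; auto. Qed.

Section Forward.
Variable n : nat.
Variable H : HybridSystem n.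

Definition pr := ((R -> nat -> Prop) * (R -> nat -> Vec n))%type.
Definition ext (a b : pr) : Prop :=
  (forall t j, fst a t j -> fst b t j) /\ (forall t j, fst a t j -> snd b t j = snd a t j).

Lemma ext_refl a : ext a a.
Proof. split; auto. Qed.

Lemma ext_trans a b c : ext a b -> ext b c -> ext a c.
Proof.
intros [h1 h2] [h3 h4]. split; auto. intros t j h. rewrite h4 by auto. auto.
Qed.

Definition Bad (r : pr) j t : Prop :=
  fst r t j /\ ~ (interior (fun s => fst r s j) t /\
    exists v, hs_F H (snd r t j) v /\
      forall i, derivable_pt_lim (fun s => snd r s j i) t (v i)).

Lemma bad_null r j : is_solution H (fst r) (snd r) -> null_set (Bad r j).
Proof.
intros [[Hh _] [_ [_ [Hii _]]]].
destruct (classic (exists t, interior (fun s => fst r s j) t)) as [Hint|Hnint].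
- destruct (Hii j Hint) as [_ [N [HN Hder]]].
  apply (null_sub N); auto. intros t [Ht Hbad]. apply NNPP. intro Hn. apply Hbad. auto.
- destruct (classic (exists a, fst r a j)) as [[a Ha]|Hna].
  + apply (null_sub (fun x => False \/ x = a)); [|apply null_add_point, null_empty].
    intros t [Ht _]. right. apply NNPP. intro Hne. apply Hnint.
    exists ((t + a) / 2). destruct (Rlt_dec t a) as [h|h].
    * apply (ball_interior _ t a); [|lra]. intros x Hx. apply (tdom_interval _ t a); auto; lra.
    * apply (ball_interior _ a t); [|lra]. intros x Hx. apply (tdom_interval _ a t); auto; lra.
  + apply (null_sub (fun _ => False)); [|apply null_empty]. intros t [Ht _]. apply Hna. eauto.
Qed.

Lemma chain_union (A : pr -> Prop) r0 : A r0 ->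
  (forall r, A r -> is_solution H (fst r) (snd r)) ->
  (forall r1 r2, A r1 -> A r2 -> ext r1 r2 \/ ext r2 r1) ->
  exists U : pr, is_solution H (fst U) (snd U) /\ forall r, A r -> ext r U.
Proof.
intros Hr0 Hsol Hch.
set (EU := fun t j => exists r, A r /\ fst r t j).
set (phiU := fun t j => match excluded_middle_informative (EU t j) with
   | left h => snd (proj1_sig (constructive_indefinite_description _ h)) t j
   | right _ => snd r0 t j end).
assert (Hag : forall r t j, A r -> fst r t j -> phiU t j = snd r t j).
{ intros r t j Hr Ht. unfold phiU. destruct (excluded_middle_informative (EU t j)) as [h|h].
  - destruct (constructive_indefinite_description _ h) as [r' [Hr' Ht']]. simpl.
    destruct (Hch r r' Hr Hr') as [[e1 e2]|[e1 e2]]; auto. symmetry; auto.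
  - exfalso. apply h. exists r; auto. }
assert (Hcom : forall r1 r2, A r1 -> A r2 -> exists r, A r /\ ext r1 r /\ ext r2 r).
{ intros r1 r2 h1 h2. destruct (Hch r1 r2 h1 h2).
  - exists r2. split; auto. split; auto. apply ext_refl.
  - exists r1. split; auto. split; auto. apply ext_refl. }
assert (Hhyb : forall r, A r -> hybrid_time_domain (fst r)).
{ intros r h. apply (Hsol r h). }
assert (HhU : hybrid_time_domain EU).
{ split.
  - intros t j [r [Hr Ht]]. apply (proj1 (Hhyb r Hr) _ _ Ht).
  - intros T J [r [Hr HT]]. destruct (get_trunc _ T J (Hhyb r Hr) HT) as [tt Htt].
    exists tt. destruct Htt as [h0 [hm hsp]]. split; auto. split; auto.
    intros s k. split.
    + intros [[r' [Hr' Hs]] [Hb Hk]]. apply hsp. split; auto.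
      destruct (Hch r' r Hr' Hr) as [[e1 _]|[e1 _]]; auto.
      apply (trunc_sub (fst r) (fst r') T J); auto.
    + intros h. apply hsp in h. destruct h as [h1 h2]. split; auto. exists r; auto. }
exists (EU, phiU). split.
2:{ intros r Hr. split; simpl. intros t j h; exists r; auto. intros t j h; apply Hag; auto. }
simpl. split; [split|split; [|split; [|split]]].
- exact HhU.
- intros j a b Hab HI i.
  destruct (HI a ltac:(lra)) as [r1 [H1 Ha]]. destruct (HI b ltac:(lra)) as [r2 [H2 Hb]].
  destruct (Hcom r1 r2 H1 H2) as [r [Hr [[e1 _] [e2 _]]]].
  destruct (Hsol r Hr) as [[_ Hac] _].
  assert (Hin : forall s, a <= s <= b -> fst r s j).
  { intros s Hs. apply (tdom_interval _ a b); auto. }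
  apply (ac_ext (fun s => snd r s j i)). apply Hac; auto.
  intros s Hs. rewrite (Hag r s j); auto.
- exists r0. split; auto. apply (Hsol r0 Hr0).
- rewrite (Hag r0 0 0%nat Hr0). apply (Hsol r0 Hr0). apply (Hsol r0 Hr0).
- intros j Hint. split.
  + intros t [e [He Hball]].
    destruct (Hball (t - e / 2)) as [r1 [H1 Ha]]. { rewrite Rabs_left; lra. }
    destruct (Hball (t + e / 2)) as [r2 [H2 Hb]]. { rewrite Rabs_right; lra. }
    destruct (Hcom r1 r2 H1 H2) as [r [Hr [[e1 _] [e2 _]]]].
    assert (Hin : interior (fun s => fst r s j) t).
    { apply (ball_interior _ (t - e / 2) (t + e / 2)); [|lra]. intros x Hx.
      apply (tdom_interval _ (t - e / 2) (t + e / 2)); auto; lra. }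
    destruct (Hsol r Hr) as [_ [_ [_ [Hii _]]]].
    rewrite (Hag r t j); auto. apply (Hii j (ex_intro _ t Hin)); auto. apply (interior_in _ _ Hin).
  + destruct Hint as [t0 Ht0].
    destruct (cofinal (fun t => EU t j)) as [u [Hu Hcof]]. { exists t0. apply (interior_in _ _ Ht0). }
    set (rm := fun m => proj1_sig (constructive_indefinite_description _ (Hu m))).
    assert (Hrm : forall m, A (rm m) /\ fst (rm m) (u m) j).
    { intro m. exact (proj2_sig (constructive_indefinite_description _ (Hu m))). }
    set (BU := fun t => EU t j /\ ~ (interior (fun s => EU s j) t /\
          exists v, hs_F H (phiU t j) v /\ forall i, derivable_pt_lim (fun s => phiU s j i) t (v i))).
    exists BU. split.
    * apply (null_sub (fun x => exists m, Bad (rm m) j x)).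
      2:{ apply null_countable. intro m. apply bad_null. apply Hsol. apply Hrm. }
      intros t [[r' [Hr' Ht]] Hbad]. destruct (Hcof t (ex_intro _ r' (conj Hr' Ht))) as [m Hm].
      exists m. destruct (Hrm m) as [Hrmm Hum].
      assert (Htm : fst (rm m) t j).
      { destruct (Hch r' (rm m) Hr' Hrmm) as [[e1 _]|[e1 _]]; auto.
        apply (trunc_sub (fst (rm m)) (fst r') (u m) j); auto.
        split; auto. apply (proj1 (Hhyb r' Hr') _ _ Ht). }
      split; auto. intros [Hint Hdv]. apply Hbad. split.
      -- apply (interior_mono (fun s => fst (rm m) s j) _ t); auto. intros x hx. exists (rm m); auto.
      -- destruct Hdv as [v [Hv Hd]]. exists v. rewrite (Hag (rm m) t j); auto. split; auto.
         intro i. apply (dpl_local (fun s => snd (rm m) s j i)); auto.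
         destruct Hint as [e [He Hball]]. exists e. split; auto. intros s Hs.
         rewrite (Hag (rm m) s j); auto.
    * intros t Ht Hn. apply NNPP. intro h. apply Hn. split; auto.
- intros t j [r1 [H1 h1]] [r2 [H2 h2]].
  destruct (Hcom r1 r2 H1 H2) as [r [Hr [[e1 _] [e2 _]]]].
  destruct (Hsol r Hr) as [_ [_ [_ [_ Hiii]]]].
  rewrite (Hag r t j), (Hag r t (S j)); auto.
Qed.

End Forward.

Lemma zorn_pre (T : Type) (t0 : T) (R : T -> T -> Prop) :
  (forall t, R t t) -> (forall r s t, R r s -> R s t -> R r t) ->
  (forall A : T -> Prop, (forall s t, A s -> A t -> R s t \/ R t s) ->
     exists t, forall s, A s -> R s t) ->
  exists t, forall s, R t s -> R s t.
Proof.
intros Hr Ht Hc.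
set (Rb := fun a b => boolp.asbool (R a b)).
assert (E : forall a b, Rb a b = true <-> R a b).
{ intros a b; unfold Rb. destruct (boolp.asboolP (R a b)); split; congruence. }
destruct (@classical_sets.ZL_preorder T t0 Rb) as [t Ht0].
- intro t; apply E; auto.
- intros r s t a b; apply E; apply E in a; apply E in b; eauto.
- intros A HA. destruct (Hc A) as [t Htt].
  + intros s t a b. destruct (HA s t a b) as [h|h]; [left|right]; apply E; exact h.
  + exists t; intros s a; apply E; auto.
- exists t; intros s h. apply E. apply Ht0. apply E. exact h.
Qed.

Section Forward2.
Variable n : nat.
Variable H : HybridSystem n.

Lemma max_ext E0 phi0 : is_solution H E0 phi0 -> exists E phi, maximal_solution H E phi /\
  (forall t j, E0 t j -> E t j) /\ (forall t j, E0 t j -> phi t j = phi0 t j).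
Proof.
intro Hs0. set (r0 := (E0, phi0) : pr n).
set (T := {r : pr n | is_solution H (fst r) (snd r) /\ ext n r0 r}).
set (t0 := exist _ r0 (conj Hs0 (ext_refl n r0)) : T).
destruct (zorn_pre T t0 (fun a b => ext n (proj1_sig a) (proj1_sig b))) as [m Hm].
- intro; apply ext_refl.
- intros a b c; apply ext_trans.
- intros A HA.
  destruct (chain_union n H (fun r => r = r0 \/ exists a, A a /\ proj1_sig a = r) r0) as [U [HU HUe]].
  + left; auto.
  + intros r [->|[a [_ <-]]]; [exact Hs0 | apply (proj2_sig a)].
  + intros r1 r2 [->|[a [Ha <-]]] [->|[b [Hb <-]]].
    * left; apply ext_refl.
    * left; apply (proj2_sig b).
    * right; apply (proj2_sig a).
    * apply HA; auto.
  + exists (exist _ U (conj HU (HUe r0 (or_introl eq_refl))) : T). intros s Hs. simpl. apply HUe. right. exists s; auto.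
- destruct m as [[E phi] [HmS Hm0]]. exists E, phi. split; [split|].
  + exact HmS.
  + intros [E' [phi' [HS' [Hsub [[t [j [Ht Hnt]]] Hagr]]]]].
    assert (He : ext n (E, phi) (E', phi')) by (split; simpl; auto).
    set (s := exist _ (E', phi') (conj HS' (ext_trans n _ _ _ Hm0 He)) : T).
    destruct (Hm s He) as [h _]. simpl in h. apply Hnt. auto.
  + destruct Hm0 as [h1 h2]. split; auto.
Qed.

Lemma points_sol m (phi0 : R -> nat -> Vec n) :
  (closure (hs_C H) (phi0 0 0%nat) \/ hs_D H (phi0 0 0%nat)) ->
  (forall k, (k < m)%nat -> hs_D H (phi0 0 k) /\ hs_G H (phi0 0 k) (phi0 0 (S k))) ->
  is_solution H (fun t j => t = 0 /\ (j <= m)%nat) phi0.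
Proof.
intros Hi Hj. split; [split|split; [|split; [|split]]].
- apply tdom_points.
- intros j' a b Hab HI i. destruct (HI a ltac:(lra)) as [-> _]. destruct (HI b ltac:(lra)) as [-> _].
  apply ac_point.
- split; auto; lia.
- exact Hi.
- intros j' [s0 [e [He Hball]]]. exfalso.
  destruct (Hball s0) as [h1 _]. { unfold Rminus; rewrite Rplus_opp_r, Rabs_R0; auto. }
  destruct (Hball (s0 + e / 2)) as [h2 _]. { rewrite Rabs_right; lra. }
  lra.
- intros s k [-> Hk1] [_ Hk2]. apply Hj. lia.
Qed.

End Forward2.

Theorem proposition4 (n : nat) (H : HybridSystem n) (p : Vec n -> bool)
  (HSA : standing_assumptions H)
  (HK : exists x, hs_X H x /\ p x = true) :
  let K := fun x => hs_X H x /\ p x = true in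
  (forall (E : R -> nat -> Prop) (phi : R -> nat -> Vec n),
     maximal_solution H E phi ->
     forall t j, E t j -> sat_next p E phi t j)
  <->
  ((* (a) *)
   (forall (E : R -> nat -> Prop) (phi : R -> nat -> Vec n),
      is_solution H E phi -> nontrivial E -> hs_D H (phi 0 0%nat)) /\
   (* (b) *)
   (forall (E : R -> nat -> Prop) (phi : R -> nat -> Vec n) (eps : R),
      is_solution H E phi -> 0 < eps -> hs_C H (phi 0 0%nat) ->
      ~ (forall t, 0 <= t < eps -> E t 0%nat)) /\
   (* (c) *)
   (forall x y, hs_D H x -> hs_G H x y -> K y /\ hs_D H y) /\
   (* (d) *)
   (forall x, closure (hs_C H) x -> hs_D H x)).
Proof.
intros K. split.
- intro HP.
  assert (Hinf : forall E phi, maximal_solution H E phi -> forall t j, E t j -> E t (S j)).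
  { intros E phi Hm t j Ht. apply (HP E phi Hm t j Ht). }
  split; [|split; [|split]].
  + intros E phi Hs _. destruct (max_ext n H E phi Hs) as [E' [phi' [Hm [Hsub Hag]]]].
    assert (H00 : E' 0 0%nat) by (apply Hsub; apply Hs).
    pose proof (Hinf _ _ Hm _ _ H00) as H01.
    destruct Hm as [[_ [_ [_ [_ Hiii]]]] _].
    rewrite <- (Hag 0 0%nat) by apply Hs. apply (Hiii 0 0%nat H00 H01).
  + intros E phi eps Hs Heps _ Hall. destruct (max_ext n H E phi Hs) as [E' [phi' [Hm [Hsub Hag]]]].
    assert (H00 : E' 0 0%nat) by (apply Hsub; apply Hs).
    pose proof (Hinf _ _ Hm _ _ H00) as H01.
    assert (Hh0 : E' (eps / 2) 0%nat) by (apply Hsub; apply Hall; lra).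
    pose proof (Hinf _ _ Hm _ _ Hh0) as Hh1.
    destruct Hm as [[[Hh _] _] _].
    destruct (get_trunc E' (eps / 2) 1 Hh Hh1) as [tt [_ [_ Hsp]]].
    assert (A1 : E' 0 1%nat /\ 0 <= 0 <= eps / 2 /\ (1 <= 1)%nat) by (repeat split; auto; lra).
    assert (A2 : E' (eps / 2) 0%nat /\ 0 <= eps / 2 <= eps / 2 /\ (0 <= 1)%nat) by (repeat split; auto; lra).
    apply Hsp in A1. apply Hsp in A2. destruct A1 as [_ A1], A2 as [_ A2]. lra.
  + intros x y Hx Hy.
    assert (Hs : is_solution H (fun t j => t = 0 /\ (j <= 1)%nat)
                   (fun _ j => match j with O => x | _ => y end)).
    { apply points_sol; auto. intros k Hk. assert (k = 0%nat) by lia. subst. simpl. auto. }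
    destruct (max_ext n H _ _ Hs) as [E' [phi' [Hm [Hsub Hag]]]].
    assert (H00 : E' 0 0%nat) by (apply Hsub; split; auto).
    destruct (HP E' phi' Hm 0 0%nat H00) as [H01 Hp1].
    pose proof (Hinf _ _ Hm _ _ H01) as H02.
    destruct Hm as [[_ [_ [_ [_ Hiii]]]] _].
    destruct (Hiii 0 1%nat H01 H02) as [HD1 _].
    rewrite (Hag 0 1%nat) in Hp1, HD1 by (split; auto). simpl in Hp1, HD1.
    split; auto. split; auto.
    destruct HSA as [_ [HG _]]. apply (HG x y Hy).
  + intros x Hx.
    assert (Hs : is_solution H (fun t j => t = 0 /\ (j <= 0)%nat) (fun _ _ => x)).
    { apply points_sol; auto. intros k Hk. lia. }
    destruct (max_ext n H _ _ Hs) as [E' [phi' [Hm [Hsub Hag]]]].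
    assert (H00 : E' 0 0%nat) by (apply Hsub; split; auto).
    pose proof (Hinf _ _ Hm _ _ H00) as H01.
    destruct Hm as [[_ [_ [_ [_ Hiii]]]] _].
    destruct (Hiii 0 0%nat H00 H01) as [HD _].
    rewrite (Hag 0 0%nat) in HD by (split; auto). exact HD.
- intros [Ha [Hb [Hc Hd]]]. apply backward; auto.
Qed.
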